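(* Let $\kappa$ be a cardinal with $\omega<\kappa<\mathfrak{c}$. Then there exists a Borel $\sigma$-ideal $I$ on $2^{\omega}$ (containing all singletons and not containing $2^\omega$) such that $\kappa$ is the maximal cardinal for which there is a family of $\kappa$ pairwise disjoint Borel subsets of $2^{\omega}$ none of which belongs to $I$. In particular, $I$ does not satisfy ccc, does not satisfy property (B), and satisfies the $\kappa^{+}$-chain condition (every family of pairwise disjoint Borel sets not in $I$ has size at most $\kappa$).
   Context: An ideal on a set $X$ is a family of subsets closed under finite unions and subsets; a $\sigma$-ideal is additionally closed under countable unions. An ideal $I$ on a Polish space $X$ is Borel if every $A\in I$ is contained in some Borel $B\in I$. $I$ satisfies ccc if every family of pairwise disjoint Borel sets not in $I$ is countable. Property (B) for $I$: there is a family of cardinality $\mathfrak{c}$ (the continuum) of pairwise disjoint Borel subsets of $X$ none of which belongs to $I$. *)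

(* Defs.v *)
From HB Require Import structures.
From mathcomp Require Import all_boot all_order all_algebra.
From mathcomp Require Import all_classical all_reals all_analysis.
Set Implicit Arguments. Unset Strict Implicit. Unset Printing Implicit Defensive.
Local Open Scope classical_set_scope.

Notation C2w := cantor_space.

Definition borel_set (A : set C2w) : Prop := <<s [set: C2w], open >> A.

Definition sigma_ideal (I : set (set C2w)) : Prop :=
  [/\ I set0,
      (forall A B, B `<=` A -> I A -> I B) &
      (forall F : nat -> set C2w, (forall n, I (F n)) -> I (\bigcup_n F n))].

Definition borel_ideal (I : set (set C2w)) : Prop :=
  forall A, I A -> exists B, [/\ borel_set B, I B & A `<=` B].

Definition disjoint_positive_family (I : set (set C2w)) (F : set (set C2w)) : Prop :=
  [/\ (forall A, F A -> borel_set A /\ ~ I A) &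
      (forall A B, F A -> F B -> A <> B -> A `&` B = set0)].

Definition ccc (I : set (set C2w)) : Prop :=
  forall F, disjoint_positive_family I F -> countable F.

Definition property_B (I : set (set C2w)) : Prop :=
  exists F, disjoint_positive_family I F /\ (F #= [set: C2w])%card.

(* Main.v *)
Require Import Defs.
From HB Require Import structures.
From mathcomp Require Import all_boot all_order all_algebra.
From mathcomp Require Import all_classical all_reals all_analysis.
Local Open Scope classical_set_scope.

Definition cyl (s : seq bool) : set C2w :=
  [set y | forall i, (i < size s)%N -> y i = nth false s i].
Definition pre (x : C2w) n : seq bool := mkseq x n.

Lemma inj_nat2 : exists pr : nat * nat -> nat, injective pr.
Proof.
have := card_nat2; rewrite card_eq_le => /andP [] /pcard_injP [f fi] _.
by exists f => x y; apply: fi; rewrite in_setT.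
Qed.

Lemma cyl_pre (x y : C2w) n : cyl (pre x n) y <-> (forall i, (i < n)%N -> y i = x i).
Proof.
rewrite /cyl /pre size_mkseq; split=> H i lin; rewrite H // nth_mkseq //.
Qed.

Lemma nbhs_cyl (x : C2w) U : nbhs x U -> exists n, cyl (pre x n) `<=` U.
Proof.
pose G := filter_from [set: nat] (fun n => cyl (pre x n)).
have FG : Filter G.
  apply: filter_from_filter; first by exists 0%N.
  move=> i j _ _; exists (maxn i j) => // y /cyl_pre H; split; apply/cyl_pre => k lk;
  apply: H; rewrite leq_max lk ?orbT //.
have : G --> (x : C2w).
  apply/(@cvg_sup _ _ _ G x FG) => i.
  move=> A /=. rewrite (@nbhsE (Topological.Pack _)). move=> [B [[C oC eC] Bx] BA].
  exists i.+1 => // y /cyl_pre yx; apply: BA; rewrite -eC /=.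
  rewrite yx //; move: Bx; rewrite -eC //.
move=> /(_ U) H /H [n _ Hn]; by exists n.
Qed.

Lemma open_coord (i : nat) (b : bool) : open [set y : C2w | y i = b].
Proof.
have H : continuous (fun y : C2w => y i).
  move=> x; exact (@proj_continuous nat (fun _ => bool) i x).
have := (continuousP _).1 H [set b].
by apply; apply: discrete_open.
Qed.

Lemma open_agree (z : C2w) n : open [set y : C2w | forall i, (i < n)%N -> y i = z i].
Proof.
elim: n => [|n IH].
  have -> : [set y : C2w | forall i, (i < 0)%N -> y i = z i] = setT.
    by apply/seteqP; split => // y _ i.
  exact: openT.
have -> : [set y : C2w | forall i, (i < n.+1)%N -> y i = z i] =
  [set y : C2w | forall i, (i < n)%N -> y i = z i] `&` [set y : C2w | y n = z n].
  apply/seteqP; split => y /=.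
    by move=> H; split; [move=> i lin; apply: H; rewrite ltnS ltnW|apply: H].
  move=> [H1 H2] i; rewrite ltnS leq_eqVlt => /orP [/eqP ->//|]; exact: H1.
by apply: openI => //; exact: open_coord.
Qed.

Lemma open_cyl s : open (cyl s).
Proof. exact: (open_agree (fun i => nth false s i) (size s)). Qed.

Lemma cyl_pre_self x n : cyl (pre x n) x.
Proof. by apply/cyl_pre. Qed.

Lemma cyl_pre_sub s y n : cyl s y -> (size s <= n)%N -> cyl (pre y n) `<=` cyl s.
Proof.
move=> ys sn z /cyl_pre zy i lis; rewrite zy; first exact: ys.
exact: leq_trans lis sn.
Qed.

Lemma open_of_cyl (U : set C2w) :
  (forall y, U y -> exists n, cyl (pre y n) `<=` U) -> open U.
Proof.
move=> H; rewrite openE => y Uy; have [n Hn] := H y Uy.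
rewrite /interior; apply: filterS Hn _; apply: open_nbhs_nbhs; split.
  exact: open_cyl.
exact: cyl_pre_self.
Qed.

Definition nwd (N : set C2w) := forall s, exists t, cyl t `<=` cyl s /\ cyl t `&` N = set0.
Definition meager (M : set C2w) :=
  exists N : nat -> set C2w, (forall k, nwd (N k)) /\ M `<=` \bigcup_k N k.

Lemma nwd_sub (N N' : set C2w) : N' `<=` N -> nwd N -> nwd N'.
Proof.
move=> sub H s; have [t [ts tN]] := H s; exists t; split=> //.
apply/seteqP; split=> // y [yt /sub yN]; rewrite -tN; by split.
Qed.

Lemma nwd0 : nwd set0.
Proof. by move=> s; exists s; split=> //; rewrite setI0. Qed.

Lemma meager_sub (M M' : set C2w) : M' `<=` M -> meager M -> meager M'.
Proof. by move=> sub [N [nN MN]]; exists N; split=> // y /sub /MN. Qed.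

Lemma meager0 : meager set0.
Proof. by exists (fun=> set0); split=> // k; exact: nwd0. Qed.

Lemma meager_bigcup (M : nat -> set C2w) : (forall n, meager (M n)) -> meager (\bigcup_n M n).
Proof.
move=> H; have [NN HN] := choice H.
have [pr prinj] := inj_nat2.
exists (fun k => \bigcup_(p in [set p | pr p = k]) NN p.1 p.2); split.
  move=> k; have [[p pk]|np] := pselect (exists p, pr p = k).
    apply: (@nwd_sub (NN p.1 p.2)); first by move=> y [q /= qk]; rewrite (prinj q p) // pk.
    by have [+ _] := HN p.1; apply.
  apply: (@nwd_sub set0); last exact: nwd0.
  by move=> y [q /= qk]; exfalso; apply: np; exists q.
move=> y [n _ /(proj2 (HN n)) [j _ yj]].
by exists (pr (n, j)) => //; exists (n, j).
Qed.

Lemma meagerU (A B : set C2w) : meager A -> meager B -> meager (A `|` B).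
Proof.
move=> mA mB; apply: (@meager_sub (\bigcup_n (if n is 0 then A else B))).
  by move=> y [Ay|By]; [exists 0%N|exists 1%N].
by apply: meager_bigcup => -[|n].
Qed.

Lemma baire s : ~ meager (cyl s).
Proof.
move=> [N [nN sub]].
have step : forall k (p : C2w * nat), {q : C2w * nat |
    [/\ cyl (pre q.1 q.2) `<=` cyl (pre p.1 p.2), (p.2 < q.2)%N &
        cyl (pre q.1 q.2) `&` N k = set0]}.
  move=> k [x n]; apply: cid; have [t [tsub tN]] := nN k (pre x n.+1).
  pose z : C2w := fun i => nth false t i.
  exists (z, maxn (size t) n.+1); split => /=.
  - apply: subset_trans (@cyl_pre_sub t z _ _ _) _ => //; first by rewrite leq_max leqnn.
    apply: subset_trans tsub _; apply: cyl_pre_sub; first exact: cyl_pre_self.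
    by rewrite /pre size_mkseq.
  - by rewrite leq_max leqnn orbT.
  - apply/seteqP; split=> // y [y1 y2]; rewrite -tN; split=> //.
    by apply: (@cyl_pre_sub t z) y1 => //; rewrite leq_max leqnn.
pose x0 : C2w := fun i => nth false s i.
pose sq := fix sq k := if k is k'.+1 then proj1_sig (step k' (sq k')) else (x0, size s).
have sqS k : sq k.+1 = proj1_sig (step k (sq k)) by [].
have nest k j : (k <= j)%N -> cyl (pre (sq j).1 (sq j).2) `<=` cyl (pre (sq k).1 (sq k).2).
  elim: j => [|j IH]; first by rewrite leqn0 => /eqP ->.
  rewrite leq_eqVlt => /orP [/eqP -> //|]; rewrite ltnS => kj.
  apply: subset_trans (IH kj); rewrite sqS; by case: (proj2_sig (step j (sq j))).
have grow k : (k <= (sq k).2)%N.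
  elim: k => // k IH; rewrite sqS; case: (proj2_sig (step k (sq k))) => _ lt _.
  exact: leq_ltn_trans IH lt.
pose x : C2w := fun i => (sq i.+1).1 i.
have xin k : cyl (pre (sq k).1 (sq k).2) x.
  apply/cyl_pre => i lin; pose m := maxn k i.+1.
  have h1 := nest k m (leq_maxl _ _) _ (cyl_pre_self _ _).
  have h2 := nest i.+1 m (leq_maxr _ _) _ (cyl_pre_self _ _).
  move/cyl_pre: h1 => /(_ i lin) <-.
  move/cyl_pre: h2 => /(_ i (grow i.+1)) h2; by rewrite h2.
have : cyl s x.
  have := xin 0%N => /=; apply: cyl_pre_sub.
    by move=> i _.
  by [].
move=> /sub [k _ xk].
have := xin k.+1; rewrite sqS; case: (proj2_sig (step k (sq k))) => _ _ e.
move=> xk1; have : (set0 : set C2w) x by rewrite -e; split.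
by [].
Qed.

Definition UD (D : set (seq bool)) : set C2w := \bigcup_(s in D) cyl s.
Definition BP (A : set C2w) :=
  exists D, meager (A `\` UD D) /\ meager (UD D `\` A).

Lemma meager_of_nwd N : nwd N -> meager N.
Proof. by move=> H; exists (fun=> N); split=> // y Ny; exists 0%N. Qed.

Lemma BP_open U : open U -> BP U.
Proof.
move=> oU; exists [set s | cyl s `<=` U]; split; apply: (@meager_sub set0 _ _ meager0).
  move=> y [Uy nD]; apply: nD.
  have [n Hn] := @nbhs_cyl y U (@open_nbhs_nbhs _ y U (conj oU Uy)).
  by exists (pre y n) => //; exact: cyl_pre_self.
by move=> y [[s sU ys] nU]; apply: nU; exact: sU.
Qed.

Lemma BP_compl A : BP A -> BP (~` A).
Proof.
move=> [D [m1 m2]].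
pose D' := [set t | cyl t `&` UD D = set0].
pose N0 := ~` UD D `\` UD D'.
have nN0 : nwd N0.
  move=> s; have [e|ne] := pselect (cyl s `&` UD D = set0).
    exists s; split=> //; apply/seteqP; split=> // y [ys [_ nyD']].
    by apply: nyD'; exists s.
  have /set0P [y [ys [d Dd yd]]] : cyl s `&` UD D != set0 by apply/eqP.
  exists (pre y (maxn (size s) (size d))); split.
    by apply: cyl_pre_sub => //; rewrite leq_max leqnn.
  apply/seteqP; split=> // z [zt [nzD _]]; apply: nzD; exists d => //.
  exact: (@cyl_pre_sub d y _ yd (leq_maxr _ _) z zt).
exists D'; split.
  apply: (@meager_sub (UD D `\` A `|` N0)); last first.
    by apply: meagerU => //; exact: meager_of_nwd.
  move=> y [nAy nD'y]; have [yD|nyD] := pselect (UD D y).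
    by left.
  by right.
apply: (@meager_sub _ _ _ m1) => y [[t D't yt] /= nnA].
have Ay : A y by apply: contrapT.
split=> // yD; have : (set0 : set C2w) y by rewrite -D't; split.
by [].
Qed.

Lemma BP_bigcup (A : nat -> set C2w) : (forall n, BP (A n)) -> BP (\bigcup_n A n).
Proof.
move=> H; have [DD HD] := choice H.
exists (\bigcup_n DD n); split.
  apply: (@meager_sub (\bigcup_n (A n `\` UD (DD n)))).
    move=> y [[n _ Ay] nD]; exists n => //; split=> // -[s Ds ys].
    by apply: nD; exists s => //; exists n.
  by apply: meager_bigcup => n; have [] := HD n.
apply: (@meager_sub (\bigcup_n (UD (DD n) `\` A n))).
  move=> y [[s [n _ Ds] ys] nA]; exists n => //; split; first by exists s.
  by move=> An; apply: nA; exists n.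
by apply: meager_bigcup => n; have [] := HD n.
Qed.

Lemma borel_BP A : borel_set A -> BP A.
Proof.
apply: smallest_sub; last by move=> U oU; exact: BP_open.
split.
- exact: (@BP_open set0 open0).
- by move=> B HB; rewrite setTD; exact: BP_compl.
- exact: BP_bigcup.
Qed.

Lemma nonmeager_cyl A : borel_set A -> ~ meager A -> exists s, meager (cyl s `\` A).
Proof.
move=> /borel_BP [D [m1 m2]] nm.
have [[s Ds]|nD] := pselect (exists s, D s).
  exists s; apply: (@meager_sub _ _ _ m2) => y [ys nA]; split=> //; by exists s.
exfalso; apply: nm; apply: (@meager_sub _ _ _ m1) => y Ay; split=> // -[s Ds _].
by apply: nD; exists s.
Qed.

Definition join (x y : C2w) : C2w := fun i => if odd i then y i./2 else x i./2.
Definition sec (x : C2w) (B : set C2w) : set C2w := [set y | B (join x y)].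
Definition col (x : C2w) : set C2w := [set z | forall i, z i.*2 = x i].

Lemma join_even x y i : join x y i.*2 = x i.
Proof. by rewrite /join odd_double doubleK. Qed.

Lemma join_odd x y i : join x y i.*2.+1 = y i.
Proof. by rewrite /join /= odd_double /= uphalf_double. Qed.

Lemma open_pre_join x U : open U -> open (join x @^-1` U).
Proof.
move=> oU; apply: open_of_cyl => y Uy.
have [n Hn] := @nbhs_cyl (join x y) U (@open_nbhs_nbhs _ _ U (conj oU Uy)).
exists n => z /cyl_pre zy; apply: Hn; apply/cyl_pre => i lin.
rewrite /join; case: (odd i) => //; rewrite zy //; apply: leq_ltn_trans lin.
by rewrite -[X in (_ <= X)%N](odd_double_half i) -addnn addnA leq_addl.
Qed.

Lemma borel_sec x B : borel_set B -> borel_set (sec x B).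
Proof.
have : <<s [set: C2w], open >> `<=` [set B | borel_set (join x @^-1` B)].
  apply: smallest_sub; last first.
    by move=> U oU; apply: sub_sigma_algebra; exact: open_pre_join.
  split.
  - by rewrite /= preimage_set0; exact: sigma_algebra0.
  - move=> B0 /= HB; have -> : join x @^-1` (setT `\` B0) = setT `\` (join x @^-1` B0).
      by apply/seteqP; split=> y /=.
    exact: sigma_algebraCD.
  - move=> F HF /=; rewrite preimage_bigcup; exact: sigma_algebra_bigcup.
by move=> H /H.
Qed.

Lemma borelC_open U : open U -> borel_set (~` U).
Proof. by move=> oU; apply: sigma_algebraC; apply: sub_sigma_algebra. Qed.

Lemma borel_col x : borel_set (col x).
Proof.
rewrite -[col x]setCK; apply: borelC_open; apply: open_of_cyl => z nz.
have [i zi] : exists i, z i.*2 <> x i.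
  by apply: contrapT => H; apply: nz => i; apply: contrapT => H'; apply: H; exists i.
exists i.*2.+1 => w /cyl_pre wz wc; apply: zi; rewrite -wc wz //.
Qed.

Lemma borel_set1 p : borel_set [set p].
Proof.
rewrite -[[set p]]setCK; apply: borelC_open; apply: open_of_cyl => z nz.
have [i zi] : exists i, z i <> p i.
  apply: contrapT => H; apply: nz; apply: functional_extensionality_dep => i.
  by apply: contrapT => H'; apply: H; exists i.
by exists i.+1 => w /cyl_pre wz wc; apply: zi; rewrite -wc wz //.
Qed.

Lemma col_join x y : col x (join x y).
Proof. by move=> i; rewrite join_even. Qed.

Lemma sec_col x : sec x (col x) = setT.
Proof. by apply/seteqP; split=> // y _; exact: col_join. Qed.

Lemma col_disj x x' z : col x z -> col x' z -> x = x'.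
Proof. by move=> h h'; apply: functional_extensionality_dep => i; rewrite -h h'. Qed.

Lemma nwd_sub1 (N : set C2w) : (forall a b, N a -> N b -> a = b) -> nwd N.
Proof.
move=> H s; have [[q Nq]|nq] := pselect (exists q, N q); last first.
  exists s; split=> //; apply/seteqP; split=> // y [_ Ny]; apply: nq; by exists y.
pose w : C2w := fun i => if (i < size s)%N then nth false s i else ~~ q i.
have ws : cyl s w by move=> i lis; rewrite /w lis.
exists (pre w (size s).+1); split; first exact: cyl_pre_sub.
apply/seteqP; split=> // z [/cyl_pre zw Nz]; have zq := H _ _ Nz Nq.
have := zw (size s) (ltnSn _); rewrite /w ltnn zq.
by case: (q (size s)).
Qed.

Lemma meager_sec1 x p : meager (sec x [set p]).
Proof.
apply: meager_of_nwd; apply: nwd_sub1 => a b ha hb.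
apply: functional_extensionality_dep => i.
by rewrite -(join_odd x a) -(join_odd x b) /sec /= in ha hb *; rewrite ha hb.
Qed.

Section Absorb.
Variables (X : pointedType) (A : set X).
Hypothesis Ainf : infinite_set A.

Let good (G : set ((X * nat) * X)) :=
  [/\ (forall p b, G (p,b) -> A p.1),
      (forall p b b', G (p,b) -> G (p,b') -> b = b'),
      (forall p p' b, G (p,b) -> G (p',b) -> p = p'),
      (forall a n m b, G ((a,m),b) -> exists c, G ((a,n),c)) &
      (forall p b, G (p,b) -> exists m c, G ((b,m),c))].

Lemma absorb : exists g : X * nat -> X,
  (forall a n, A a -> A (g (a, n))) /\
  (forall a n a' n', A a -> A a' -> g (a, n) = g (a', n') -> a = a' /\ n = n').
Proof.
have [G [[Gdom Gfun Ginj Gtot Grng] Gmax]] : exists G, good G /\ forall B, G `<` B -> ~ good B.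
  apply: Zorn_bigcup => F FP Ftot; split.
  - move=> p b [H FH HG]; have [+ _ _ _ _] := FP _ FH; apply; exact: HG.
  - move=> p b b' [H1 FH1 H1p] [H2 FH2 H2p].
    have [H12|H21] := Ftot _ _ FH1 FH2.
      by have [_ Hf _ _ _] := FP _ FH2; apply: (Hf p) => //; apply: H12.
    by have [_ Hf _ _ _] := FP _ FH1; apply: (Hf p) => //; apply: H21.
  - move=> p p' b [H1 FH1 H1p] [H2 FH2 H2p].
    have [H12|H21] := Ftot _ _ FH1 FH2.
      by have [_ _ Hf _ _] := FP _ FH2; apply: (Hf _ _ b) => //; apply: H12.
    by have [_ _ Hf _ _] := FP _ FH1; apply: (Hf _ _ b) => //; apply: H21.
  - move=> a n m b [H FH Hp]; have [_ _ _ + _] := FP _ FH.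
    by move=> /(_ _ n _ _ Hp) [c Hc]; exists c; exists H.
  - move=> p b [H FH Hp]; have [_ _ _ _ +] := FP _ FH.
    by move=> /(_ _ _ Hp) [m [c Hc]]; exists m, c; exists H.
pose D := [set a | exists m c, G ((a,m),c)].
have DA : D `<=` A by move=> a [m [c /Gdom]].
have Efin : finite_set (A `\` D).
  have [//|/infiniteP /pcard_leP /injfunPex [h hfun hinj]] := pselect (finite_set (A `\` D)); exfalso.
  have [pr prinj] := inj_nat2.
  pose G' := G `|` [set q | exists i n, q = ((h i, n), h (pr (i,n)))].
  have hD i : ~ D (h i) by have [] := hfun i I.
  have hA i : A (h i) by have [] := hfun i I.
  have hi i j : h i = h j -> i = j by apply: hinj; rewrite in_setT.
  apply: (Gmax G'); last first.
  split.
  - move=> p b [/Gdom //|[i [n [-> _]]]] /=; exact: hA.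
  - move=> p b b' [H1|[i [n [-> ->]]]] [H2|[i' [n' [e1 ->]]]].
    + exact: Gfun H1 H2.
    + by exfalso; apply: (hD i'); move: H1; rewrite e1 => H1; exists n', b.
    + by exfalso; apply: (hD i); exists n, b'.
    + by move: e1 => [/hi -> ->].
  - move=> p p' b [H1|[i [n [-> ->]]]] [H2|[i' [n' [-> e1]]]].
    + exact: Ginj H1 H2.
    + exfalso; have [m [c Hc]] := Grng _ _ H1; apply: (hD (pr (i',n'))).
      by rewrite -e1; exists m, c.
    + exfalso; have [m [c Hc]] := Grng _ _ H2; apply: (hD (pr (i,n))).
      by exists m, c.
    + by move: e1 => /hi /prinj [-> ->].
  - move=> a n m b [H|[i [n' [[-> _] _]]]].
      by have [c Hc] := Gtot _ n _ _ H; exists c; left.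
    by exists (h (pr (i,n))); right; exists i, n.
  - move=> p b [H|[i [n [_ ->]]]].
      by have [m [c Hc]] := Grng _ _ H; exists m, c; left.
    by exists 0%N, (h (pr (pr (i,n), 0%N))); right; exists (pr (i,n)), 0%N.
  split.
  - by move=> q /= ?; left.
  - move=> /(_ ((h 0%N, 0%N), h (pr (0,0)%N))) H.
    have Hg : G ((h 0%N, 0%N), h (pr (0,0)%N)) by apply: H; right; exists 0%N, 0%N.
    by apply: (hD 0%N); exists 0%N, (h (pr (0%N,0%N))).
have Dinf : infinite_set D.
  move=> Dfin; apply: Ainf; apply: (@sub_finite_set _ _ (D `|` (A `\` D))).
    by move=> a Aa; case: (pselect (D a)) => Da; [left|right].
  by rewrite finite_setU; split.
have [d0 Dd0] : D !=set0 by apply: infinite_setN0.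
pose gam (p : X * nat) := xget point [set b | G (p, b)].
have gamG p : D p.1 -> G (p, gam p).
  case: p => a n [m [c Hc]]; have [c' Hc'] := Gtot _ n _ _ Hc.
  exact: (@xgetI _ point [set b | G ((a,n), b)] c').
have gamD p : D p.1 -> D (gam p).
  by move=> /gamG /Grng [m [c Hc]]; exists m, c.
have gami p p' : D p.1 -> D p'.1 -> gam p = gam p' -> p = p'.
  move=> Da Da' e; apply: (Ginj _ _ (gam p)); first exact: gamG.
  by rewrite e; apply: gamG.
have [e einj] : exists e : X -> nat, {in A `\` D &, injective e}.
  by apply/pcard_injP; apply: finite_set_countable.
pose k a := if pselect (D a) then (a, 0%N) else (d0, (e a).+1).
have kD a : D (k a).1 by rewrite /k; case: pselect.
exists (fun p => gam (gam (k p.1), p.2)); split.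
  by move=> a n _ /=; apply/DA/gamD/gamD.
move=> a n a' n' Aa Aa' /= /gami H.
move: (H (gamD _ (kD a)) (gamD _ (kD a'))) => [ek ->].
move: ek => /(gami _ _ (kD a) (kD a')).
rewrite /k; case: pselect => Da; case: pselect => Da' //= [].
- by move=> ->; split.
- move=> ee; split=> //; apply: einj => //; rewrite inE; by split.
Qed.
End Absorb.

Theorem theorem1p1 (T : Type) (K : set T)
  (hK1 : ~ countable K)
  (hK2 : (K #<= [set: C2w])%card)
  (hK3 : ~ ([set: C2w] #<= K)%card) :
  exists I : set (set C2w),
    [/\ sigma_ideal I, borel_ideal I,
        (forall x : C2w, I [set x]) & ~ I [set: C2w]] /\
    [/\ (exists F, disjoint_positive_family I F /\ (F #= K)%card),
        (forall F, disjoint_positive_family I F -> (F #<= K)%card),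
        ~ ccc I & ~ property_B I].
Proof.
have /pcard_injP [f finj] := hK2.
pose S := f @` K.
have SK : (S #= K)%card := inj_card_eq finj.
have Sunc : ~ countable S by rewrite (eq_countable SK).
have Sinf : infinite_set S by move=> /finite_set_countable.
have [g [gS ginj]] := @absorb _ S Sinf.
have [x0 Sx0] : exists x, S x.
  apply: contrapT => H; apply: Sunc; have -> : S = set0.
    by apply/seteqP; split=> // x Sx; apply: H; exists x.
  exact: countable0.
pose I := fun A : set C2w =>
  exists B, [/\ borel_set B, A `<=` B & forall x, S x -> meager (sec x B)].
have Ipos A : borel_set A -> ~ I A -> exists x, S x /\ ~ meager (sec x A).
  move=> bA nI; apply: contrapT => H; apply: nI; exists A; split=> // x Sx.
  by apply: contrapT => nm; apply: H; exists x.
have cmap A : borel_set A -> ~ I A -> exists x s, S x /\ meager (cyl s `\` sec x A).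
  move=> bA /(Ipos _ bA) [x [Sx nm]].
  have [s ms] := nonmeager_cyl _ (borel_sec x A bA) nm.
  by exists x, s.
have dkey x s (A A' : set C2w) : meager (cyl s `\` sec x A) ->
    meager (cyl s `\` sec x A') -> A `&` A' = set0 -> False.
  move=> m1 m2 e; apply: (baire s).
  apply: (@meager_sub _ _ _ (meagerU _ _ m1 m2)) => y ys.
  have [h1|h1] := pselect (sec x A y); last by left.
  have [h2|h2] := pselect (sec x A' y); last by right.
  by have : (set0 : set C2w) (join x y) by rewrite -e.
pose F0 := col @` S.
have pos0 : disjoint_positive_family I F0.
  split.
    move=> A [x Sx <-]; split; first exact: borel_col.
    move=> [B [bB cB mB]]; apply: (baire [::]).
    apply: (@meager_sub _ _ _ (mB x Sx)) => y _; apply: cB; exact: col_join.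
  move=> A B [x Sx <-] [x' Sx' <-] ne; apply/seteqP; split=> // z [z1 z2].
  by apply: ne; rewrite (col_disj _ _ _ z1 z2).
have F0K : (F0 #= K)%card.
  have : (F0 #= S)%card.
    apply: inj_card_eq => x x' _ _ e.
    have := col_join x x0; rewrite e => h; exact: col_disj _ _ _ (col_join x x0) h.
  by move=> h; exact: card_eq_trans h SK.
have bound : forall F, disjoint_positive_family I F -> (F #<= K)%card.
  move=> F [Fpos Fdisj].
  have : forall A, exists p : C2w * seq bool, F A -> S p.1 /\ meager (cyl p.2 `\` sec p.1 A).
    move=> A; have [FA|nFA] := pselect (F A); last by exists (x0, [::]).
    have [bA nIA] := Fpos A FA; have [x [s [Sx ms]]] := cmap A bA nIA.
    by exists (x, s).
  move=> /choice [phi Hphi].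
  rewrite -(card_le_eqr SK).
  apply/pcard_leP; apply/injfunPex.
  exists (fun A => g ((phi A).1, pickle (phi A).2)).
    by move=> A FA; apply: gS; have [] := Hphi A FA.
  move=> A A'; rewrite !inE => FA FA' e.
  have [S1 m1] := Hphi A FA; have [S2 m2] := Hphi A' FA'.
  have [e1 e2] := ginj _ _ _ _ S1 S2 e.
  have e2' := pcan_inj pickleK_inv e2.
  apply: contrapT => ne; apply: (dkey (phi A).1 (phi A).2 A A' m1).
    by rewrite e1 e2'.
  exact: Fdisj.
exists I; split; split.
- split.
  + exists set0; split=> //; first exact: sigma_algebra0.
    by move=> x _; apply: (@meager_sub _ _ _ meager0).
  + move=> A B BA [C [bC AC mC]]; exists C; split=> //; by move=> y /BA /AC.
  + move=> Fs HF; have [BB HB] := choice HF.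
    exists (\bigcup_n BB n); split.
    * by apply: sigma_algebra_bigcup => n; have [] := HB n.
    * by move=> y [n _ Fy]; exists n => //; have [_ + _] := HB n; apply.
    * move=> x Sx; apply: (@meager_sub (\bigcup_n sec x (BB n))).
        by move=> y [n _ h]; exists n.
      by apply: meager_bigcup => n; have [_ _] := HB n; apply.
- move=> A [B [bB AB mB]]; exists B; split=> //; exists B; split=> //.
- move=> x; exists [set x]; split=> //; first exact: borel_set1.
  move=> y _; exact: meager_sec1.
- move=> [B [bB TB mB]]; apply: (baire [::]).
  by apply: (@meager_sub _ _ _ (mB x0 Sx0)) => y _; apply: TB.
- by exists F0.
- exact: bound.
- move=> H; apply: hK1; rewrite -(eq_countable F0K); exact: H F0 pos0.
- move=> [F [pF FT]]; apply: hK3.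
  apply: (@card_le_trans _ _ _ F); last exact: bound.
  by move: FT; rewrite card_eq_sym card_eq_le => /andP [].
Qed.
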